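(* Let $\Sigma=(X,\mathcal{S},\phi)$ be a forward complete dynamical system whose transition map $\phi$ is $\mathcal{S}$-uniformly continuous, and assume there exist $t_1>0$, $G_0>0$ such that $\|\phi(t,x,\sigma)\|\le G_0\|x\|$ for all $t\in[0,t_1]$, $x\in X$, $\sigma\in\mathcal{S}$. Then the following are equivalent: (i) $\Sigma$ is UGES; (ii) there exist a continuous functional $V:X\to\mathbb{R}_+$ and positive reals $p,\underline{c},\overline{c}$ such that $\underline{c}\|x\|^p\le V(x)\le\overline{c}\|x\|^p$ for all $x\in X$ and $\overline{D}_\sigma V(x)\le-\|x\|^p$ for all $x\in X$, $\sigma\in\mathcal{S}$; (iii) there exist a functional $V:X\to\mathbb{R}_+$ and positive reals $p,c$ such that for every $x\in X$ and $\sigma\in\mathcal{S}$ the map $t\mapsto V(\phi(t,x,\sigma))$ is continuous from the left, $\overline{D}_\sigma V(x)\le-\|x\|^p$ for all $x\in X$, $\sigma\in\mathcal{S}$, and $V(x)\le c\|x\|^p$ for all $x\in X$.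
   Context: $(X,\|\cdot\|)$ is a Banach space and $B_X(x,r)$ is the closed ball of center $x$ and radius $r$. Let $\mathcal{Q}$ be a nonempty set and $\mathcal{S}$ a set of functions $\sigma:\mathbb{R}_+\to\mathcal{Q}$ closed by time-shift (for $\sigma\in\mathcal{S}$, $\tau\ge0$, $\mathbb{T}_\tau\sigma:s\mapsto\sigma(\tau+s)$ is in $\mathcal{S}$) and by concatenation (for $\sigma_1,\sigma_2\in\mathcal{S}$, $\tau>0$, the function equal to $\sigma_1$ on $[0,\tau]$ and with $\sigma(\tau+t)=\sigma_2(t)$ for $t>0$ is in $\mathcal{S}$). A triple $\Sigma=(X,\mathcal{S},\phi)$ with $\phi:\mathbb{R}_+\times X\times\mathcal{S}\to X$ is a forward complete dynamical system if: $\phi(0,x,\sigma)=x$; $\phi(t,x,\tilde\sigma)=\phi(t,x,\sigma)$ whenever $\tilde\sigma=\sigma$ on $[0,t]$; $t\mapsto\phi(t,x,\sigma)$ is continuous; $\phi(\tau,\phi(t,x,\sigma),\mathbb{T}_t\sigma)=\phi(t+\tau,x,\sigma)$ for all $t,\tau\ge0$. $\Sigma$ is UGES if there exist $M,\lambda>0$ with $\|\phi(t,x,\sigma)\|\le Me^{-\lambda t}\|x\|$ for all $t\ge0$, $x\in X$, $\sigma\in\mathcal{S}$. The upper Dini derivative is $\overline{D}_\sigma V(x)=\limsup_{h\downarrow0}\frac1h\big(V(\phi(h,x,\sigma))-V(x)\big)$. $\phi$ is $\mathcal{S}$-uniformly continuous if for every $\bar t>0$, $x\in X$, $\varepsilon>0$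 there is $\eta>0$ with $\|\phi(t,x,\sigma)-\phi(t,y,\sigma)\|\le\varepsilon$ for all $t\in[0,\bar t]$, $y\in B_X(x,\eta)$, $\sigma\in\mathcal{S}$. *)

(* Defs.v *)
From HB Require Import structures.
From mathcomp Require Import all_boot all_order all_algebra.
From mathcomp Require Import all_classical all_reals all_analysis.
Set Implicit Arguments. Unset Strict Implicit. Unset Printing Implicit Defensive.
Import Order.TTheory GRing.Theory Num.Theory.
Import numFieldNormedType.Exports.
Local Open Scope classical_set_scope.
Local Open Scope ring_scope.

(* Signals are functions R -> Q; only their values on [0, +oo) matter.  Time shift  T_tau sigma : s |-> sigma (tau + s). *)
Definition tshift (R : realType) (Q : Type) (tau : R) (s : R -> Q) : R -> Q :=
  fun t => s (tau + t).

Definition concat (R : realType) (Q : Type) (tau : R) (s1 s2 : R -> Q) : R -> Q :=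
  fun t => if t <= tau then s1 t else s2 (t - tau).

Definition shift_closed (R : realType) (Q : Type) (S : set (R -> Q)) :=
  forall s tau, S s -> 0 <= tau -> S (tshift tau s).

Definition concat_closed (R : realType) (Q : Type) (S : set (R -> Q)) :=
  forall s1 s2 tau, S s1 -> S s2 -> 0 < tau -> S (concat tau s1 s2).

Definition fc_dyn_system (R : realType) (X : normedModType R) (Q : Type)
    (S : set (R -> Q)) (phi : R -> X -> (R -> Q) -> X) : Prop :=
  shift_closed S /\ concat_closed S /\
      (forall x s, S s -> phi 0 x s = x) /\
      (forall t x s s', S s -> S s' -> 0 <= t ->
         (forall r, 0 <= r <= t -> s' r = s r) -> phi t x s' = phi t x s) /\
      (forall x s, S s -> {within `[0, +oo[, continuous (fun t => phi t x s)}) /\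
      (forall t tau x s, S s -> 0 <= t -> 0 <= tau ->
         phi tau (phi t x s) (tshift t s) = phi (t + tau) x s).

Definition UGES (R : realType) (X : normedModType R) (Q : Type)
    (S : set (R -> Q)) (phi : R -> X -> (R -> Q) -> X) : Prop :=
  exists M lam : R, 0 < M /\ 0 < lam /\
    forall t x s, 0 <= t -> S s -> `|phi t x s| <= M * expR (- lam * t) * `|x|.

Definition dini_upper (R : realType) (X : normedModType R) (Q : Type)
    (phi : R -> X -> (R -> Q) -> X) (V : X -> R) (x : X) (s : R -> Q) : \bar R :=
  limf_esup (fun h : R => ((V (phi h x s) - V x) / h)%:E) (0^'+).

Definition S_unif_cont (R : realType) (X : normedModType R) (Q : Type)
    (S : set (R -> Q)) (phi : R -> X -> (R -> Q) -> X) : Prop :=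
  forall (tb : R) (x : X) (eps : R), 0 < tb -> 0 < eps ->
    exists eta : R, 0 < eta /\
      forall t y s, 0 <= t <= tb -> `|y - x| <= eta -> S s ->
        `|phi t x s - phi t y s| <= eps.

(* Main.v *)
Require Import Defs.
From HB Require Import structures.
From mathcomp Require Import all_boot all_order all_algebra.
From mathcomp Require Import all_classical all_reals all_analysis.
From mathcomp Require Import ring lra.
Import Order.TTheory GRing.Theory Num.Theory.
Import numFieldNormedType.Exports.
Local Open Scope classical_set_scope.
Local Open Scope ring_scope.
Lemma cont0 {R : realType} {X : normedModType R} {f : R -> X} :
  {within `[0, +oo[, continuous f} -> forall eta, 0 < eta ->
  exists2 d, 0 < d & forall u, 0 <= u < d -> `|f 0 - f u| <= eta.
Proof.
move=> /continuous_within_itvcyP [_ fc] eta eta0.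
have := fc => /cvgrPdist_le /(_ eta eta0).
move=> /= /nbhs_ballP [d d0 Hd].
exists d => // u /andP[u0 ud].
have [->|un0] := eqVneq u 0; first by rewrite subrr normr0 ltW.
apply: Hd; last by rewrite lt_def un0.
by rewrite /ball /= sub0r normrN ger0_norm.
Qed.

Lemma phi_ind0 (R : realType) (X : normedModType R) (Q : Type)
  (S : set (R -> Q)) (phi : R -> X -> (R -> Q) -> X) :
  fc_dyn_system S phi -> S_unif_cont S phi ->
  forall x s1 s2 t, S s1 -> S s2 -> 0 <= t ->
  (forall r, 0 < r -> s1 r = s2 r) -> phi t x s1 = phi t x s2.
Proof.
move=> [shS [ccS [ph0 [caus [cont coc]]]]] uc x s1 s2 t S1 S2 t0 e12.
have [->|tn0] := eqVneq t 0; first by rewrite !ph0.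
have tp : 0 < t by rewrite lt_def tn0.
apply/eqP; rewrite -subr_eq0 -normr_le0.
apply/ler_addgt0Pr => e e0; rewrite add0r.
have e20 : 0 < e / 2 by rewrite divr_gt0.
have [eta [eta0 Heta]] := uc t x (e / 2) tp e20.
have [d1 d10 H1] := cont0 (cont x s1 S1) _ eta0.
rewrite ph0 // in H1.
have [d2 d20 H2] := cont0 (cont x s2 S2) _ eta0.
rewrite ph0 // in H2.
pose u := Num.min (Num.min d1 d2) t / 2.
have m0 : 0 < Num.min (Num.min d1 d2) t by rewrite !lt_min d10 d20 tp.
have u0 : 0 < u by rewrite divr_gt0.
have ult : u < Num.min (Num.min d1 d2) t by rewrite /u ltr_pdivrMr // ltr_pMr // ltr1n.
move: ult; rewrite !lt_min => /andP[/andP[ud1 ud2] ut].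
have tu0 : 0 <= t - u by rewrite subr_ge0 ltW.
have E1 : phi t x s1 = phi (t - u) (phi u x s1) (tshift u s2).
  rewrite -[in LHS](subrK u t) [t - u + u]addrC -(coc u (t - u) x s1) //; last exact: ltW.
  apply: caus => //; try exact: shS (ltW u0).
  move=> r /andP[r0 _]; rewrite /tshift e12 //; lra.
have E2 : phi t x s2 = phi (t - u) (phi u x s2) (tshift u s2).
  by rewrite -[in LHS](subrK u t) [t - u + u]addrC -(coc u (t - u) x s2) //; exact: ltW.
have Sh : S (tshift u s2) by exact: shS (ltW u0).
have tub : 0 <= t - u <= t by rewrite tu0 /= gerBl ltW.
rewrite E1 E2 -(subrK (phi (t - u) x (tshift u s2)) (phi (t - u) (phi u x s1) (tshift u s2))).
rewrite -addrA (splitr e); apply: le_trans (ler_normD _ _) _.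
apply: lerD.
  rewrite -normrN opprB; apply: Heta => //.
  by rewrite -normrN opprB; apply: H1; rewrite ltW.
apply: Heta => //.
by rewrite -normrN opprB; apply: H2; rewrite ltW.
Qed.

Lemma phi_concat (R : realType) (X : normedModType R) (Q : Type)
  (S : set (R -> Q)) (phi : R -> X -> (R -> Q) -> X) :
  fc_dyn_system S phi -> S_unif_cont S phi ->
  forall x s s' h t, S s -> S s' -> 0 < h -> 0 <= t ->
  phi t (phi h x s) s' = phi (h + t) x (concat h s s').
Proof.
move=> fc uc x s s' h t Ss Ss' h0 t0.
have fc' := fc; move: fc' => [shS [ccS [ph0 [caus [cont coc]]]]].
have Sc : S (concat h s s') by exact: ccS.
rewrite -coc //; last exact: ltW.
have -> : phi h x (concat h s s') = phi h x s.
  apply: caus => //; first exact: ltW.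
  by move=> r /andP[_ rh]; rewrite /concat rh.
apply: (@phi_ind0 _ _ _ _ _ fc uc) => //; try exact: shS (ltW h0).
move=> r r0; rewrite /tshift /concat.
have -> : (h + r <= h) = false by apply/negbTE; rewrite -ltNge; lra.
by rewrite [h + r]addrC addrK.
Qed.

Lemma esup_le_of (R : realType) (f : R -> R) (a : R) :
  (forall e, 0 < e -> exists2 d, 0 < d & forall h, 0 < h < d -> f h <= a + e) ->
  (limf_esup (fun h : R => (f h)%:E) (0^'+) <= a%:E)%E.
Proof.
move=> H; apply/lee_addgt0Pr => e e0.
have [d d0 Hd] := H e e0.
have V0 : 0^'+ [set h : R | 0 < h < d].
  have := nbhs_right_gt (0:R); have := nbhs_right_lt d0.
  apply: filterS2 => h h1 h2 /=. by rewrite h1 h2.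
apply: le_trans (ereal_inf_lbound _) _.
  exists [set h : R | 0 < h < d] => //.
apply: ge_ereal_sup => _ [h hV <-].
by rewrite -EFinD lee_fin Hd.
Qed.

Lemma esup_le_to (R : realType) (f : R -> R) (a : R) :
  (limf_esup (fun h : R => (f h)%:E) (0^'+) <= a%:E)%E ->
  forall e, 0 < e -> exists2 d, 0 < d & forall h, 0 < h < d -> f h <= a + e.
Proof.
move=> H e e0.
have : (limf_esup (fun h : R => (f h)%:E) (0^'+) < (a + e)%:E)%E.
  by apply: le_lt_trans H _; rewrite lte_fin ltrDl.
move=> /ereal_inf_lt [_ [V V0 <-]] HV.
move: V0 => /nbhs_ballP [d d0 Hd].
exists d => // h /andP[h0 hd].
have Vh : V h.
  apply: Hd; last exact: h0.
  by rewrite /ball /= sub0r normrN gtr0_norm.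
rewrite -lee_fin; apply: le_trans (ltW HV).
by apply: ereal_sup_ubound; exists h.
Qed.


Lemma cmp_fixed (R : realType) (w : R -> R) (a b m e : R) : a <= b -> 0 < e ->
  (forall t, a <= t < b -> exists2 d, 0 < d & forall h, 0 < h < d -> w (t + h) <= w t + (- m + e) * h) ->
  (forall t, a < t <= b -> forall e, 0 < e -> exists2 d, 0 < d & forall s, t - d < s < t -> w t <= w s + e) ->
  w b <= w a - (m - e) * (b - a).
Proof.
move=> ab e0 Hd Hl.
pose P s := w s <= w a - (m - e) * (s - a).
pose A := [set t | a <= t <= b /\ forall s, a <= s <= t -> P s].
have Aa : A a.
  split; first by rewrite lexx ab.
  move=> s /andP[s1 s2]; have -> : s = a by apply/eqP; rewrite eq_le s1 s2.
  by rewrite /P subrr mulr0 subr0.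
have An : A !=set0 by exists a.
have Aub : ubound A b by move=> t [/andP[_ ->]].
pose T := sup A.
have aT : a <= T by apply: ub_le_sup => //; exists b.
have Tb : T <= b by apply: ge_sup.
have C1 : forall s, a <= s < T -> P s.
  move=> s /andP[aS sT]; have [t [_ Ht] st] := sup_gt An sT.
  by apply: Ht; rewrite aS ltW.
have C2 : P T.
  have [Ta|Tna] := eqVneq T a; first by rewrite Ta /P subrr mulr0 subr0.
  have aT' : a < T by rewrite lt_def Tna aT.
  rewrite /P; apply/ler_addgt0Pr => e' e'0.
  have e'2 : 0 < e' / 2 by rewrite divr_gt0.
  have [d d0 Hd'] := Hl T ltac:(by rewrite aT' Tb) (e' / 2) e'2.
  pose k := e' / (2 * (`|m - e| + 1)).
  have k0 : 0 < k by rewrite divr_gt0 // mulr_gt0 // ltr_pwDr.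
  pose r := Num.min (Num.min d (T - a)) k / 2.
  have r0 : 0 < r by rewrite divr_gt0 // !lt_min d0 k0 subr_gt0 aT'.
  have rlt : r < Num.min (Num.min d (T - a)) k.
    rewrite /r; have : 0 < Num.min (Num.min d (T - a)) k by rewrite !lt_min d0 k0 subr_gt0 aT'.
    lra.
  move: rlt; rewrite !lt_min => /andP[/andP[rd rTa] rk].
  have Ps : P (T - r) by apply: C1; apply/andP; split; lra.
  have := Hd' (T - r) ltac:(apply/andP; split; lra) => HwT.
  have hm : m - e <= `|m - e| by exact: ler_norm.
  have hk : (`|m - e| + 1) * k = e' / 2.
    by rewrite /k; field; rewrite lt0r_neq0 // ltr_pwDr.
  have Hmr : (m - e) * r <= e' / 2.
    rewrite -hk; have := normr_ge0 (m - e); nra.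
  move: Ps; rewrite /P => Ps.
  have E : (m - e) * (T - r - a) = (m - e) * (T - a) - (m - e) * r by ring.
  rewrite E in Ps; lra.
have C3 : T = b.
  apply/eqP; rewrite eq_le Tb /=; rewrite leNgt; apply/negP => Tlb.
  have [d d0 Hdd] := Hd T ltac:(by rewrite aT Tlb).
  pose T' := Num.min (T + d / 2) b.
  have T'T : T < T' by rewrite /T' lt_min Tlb andbT; lra.
  have AT' : A T'.
    split; first by apply/andP; split; [lra| rewrite /T' ge_min lexx orbT].
    move=> s /andP[s1 s2].
    have [sT|Ts] := ltP s T; first by apply: C1; rewrite s1 sT.
    have [sTe|sTn] := eqVneq s T; first by rewrite sTe.
    have Tls : T < s by rewrite lt_def sTn Ts.
    have s2' : s <= T + d / 2 by move: s2; rewrite /T' le_min => /andP[].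
    have := Hdd (s - T) ltac:(apply/andP; split; lra).
    rewrite addrC subrK => Hs.
    move: C2; rewrite /P => C2.
    rewrite /P.
    have E : (- m + e) * (s - T) = (m - e) * (T - a) - (m - e) * (s - a) by ring.
    lra.
  have : T' <= T by apply: ub_le_sup => //; exists b.
  lra.
by move: C2; rewrite /P C3.
Qed.

Lemma cmp (R : realType) (w : R -> R) (a b m : R) : a <= b ->
  (forall t, a <= t < b -> forall e, 0 < e -> exists2 d, 0 < d & forall h, 0 < h < d -> (w (t + h) - w t) / h <= - m + e) ->
  (forall t, a < t <= b -> forall e, 0 < e -> exists2 d, 0 < d & forall s, t - d < s < t -> w t <= w s + e) ->
  w b <= w a - m * (b - a).
Proof.
move=> ab Hd Hl; apply/ler_addgt0Pr => e' e'0.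
pose e := e' / (b - a + 1).
have e0 : 0 < e by rewrite divr_gt0 //; lra.
have := @cmp_fixed _ w a b m e ab e0.
have Hd' : forall t, a <= t < b -> exists2 d, 0 < d & forall h, 0 < h < d -> w (t + h) <= w t + (- m + e) * h.
  move=> t Ht; have [d d0 Hdd] := Hd t Ht e e0; exists d => // h Hh.
  have := Hdd h Hh; rewrite ler_pdivrMr; last by case/andP: Hh.
  lra.
move=> /(_ Hd' Hl) H.
have : e * (b - a) <= e'.
  rewrite /e mulrC mulrA ler_pdivrMr; last lra.
  nra.
have E : (m - e) * (b - a) = m * (b - a) - e * (b - a) by ring.
lra.
Qed.

Lemma leftc (R : realType) (X : normedModType R) (V : X -> R) (g : R -> X) t :
  continuous V -> {within `[0, +oo[, continuous g} -> 0 < t ->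
  (fun r => V (g r)) @ t^'- --> V (g t).
Proof.
move=> Vc /continuous_within_itvcyP [gc _] t0.
apply: cvg_within_filter.
apply: continuous_comp; last exact: Vc.
by apply: gc; rewrite in_itv /= t0.
Qed.

Lemma powle {R : realType} {a b p : R} : 0 <= p -> 0 <= a -> a <= b -> a `^ p <= b `^ p.
Proof.
move=> p0 a0 ab; apply: (ge0_ler_powR p0) => //; rewrite nnegrE //.
exact: le_trans ab.
Qed.

Lemma decay (R : realType) (c p t1 G0 : R) : 0 < c -> 0 < p -> 0 < t1 -> 0 < G0 ->
  exists M lam : R, 0 < M /\ 0 < lam /\ forall (w y : R -> R),
   (forall t, 0 <= t -> 0 <= w t /\ w t <= c * y t `^ p) ->
   (forall t, 0 <= t -> 0 <= y t) ->
   (forall a u, 0 <= a -> a <= u <= a + t1 -> y u <= G0 * y a) ->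
   (forall t, 0 <= t -> w (t + t1) <= w t - t1 * (y (t + t1) / G0) `^ p) ->
   forall t, 0 <= t -> y t <= M * expR (- lam * t) * y 0.
Proof.
move=> c0 p0 t10 G00.
pose g := G0 `^ p.
have g0 : 0 < g by exact: powR_gt0.
pose k := t1 / (c * g).
have k0 : 0 < k by rewrite divr_gt0 // mulr_gt0.
pose q := (1 + k)^-1.
have q0 : 0 < q by rewrite invr_gt0; lra.
pose rho := ln (1 + k) / t1.
have rho0 : 0 < rho by rewrite divr_gt0 // ln_gt0 //; lra.
have qE : q = expR (- (rho * t1)).
  by rewrite /rho divfK ?gt_eqF // expRN lnK // posrE; lra.
pose K := (g + g * g * c / (t1 * q)) * expR (rho * t1).
have K0 : 0 < K.
  rewrite /K mulr_gt0 ?expR_gt0 // addr_gt0 // divr_gt0 // ?mulr_gt0 //.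
exists (K `^ p^-1), (rho / p); split; first exact: powR_gt0.
split; first by rewrite divr_gt0.
move=> w y Hw Hy Hg Hd.
have L1 : forall t, 0 <= t -> y t `^ p = g * (y t / G0) `^ p.
  move=> t t0; rewrite /g -powRM ?divr_ge0 ?(ltW G00) ?Hy //.
  by rewrite mulrC divfK ?gt_eqF.
have L2 : forall t, 0 <= t -> w (t + t1) <= q * w t.
  move=> t t0.
  have tt0 : 0 <= t + t1 by lra.
  have [_ Hw1] := Hw _ tt0; have [Hw0 _] := Hw _ t0.
  have := Hd t t0; rewrite L1 // in Hw1.
  set m := (y (t + t1) / G0) `^ p => Hd1.
  have m0 : 0 <= m by exact: powR_ge0.
  have kE : k * (c * g) = t1 by rewrite /k divfK // gt_eqF // mulr_gt0.
  have H1 : k * w (t + t1) <= t1 * m.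
    have E : k * (c * (g * m)) = t1 * m by rewrite -kE; ring.
    by rewrite -E ler_pM2l.
  have H : (1 + k) * w (t + t1) <= w t by rewrite mulrDl mul1r; lra.
  by rewrite /q mulrC ler_pdivlMr; [rewrite mulrC | lra].
have L3 : forall t, 0 <= t -> y (t + t1) `^ p <= g * w t / t1.
  move=> t t0; have tt0 : 0 <= t + t1 by lra.
  have [Hw0 _] := Hw _ tt0.
  have := Hd t t0; rewrite L1 //.
  set m := (y (t + t1) / G0) `^ p => Hd1.
  rewrite -mulrA ler_pM2l // ler_pdivlMr //; nra.
have L4 : forall n : nat, w (n%:R * t1) <= q ^+ n * w 0.
  elim=> [|n IH]; first by rewrite mul0r expr0 mul1r.
  have n0 : 0 <= n%:R * t1 :> R by rewrite mulr_ge0 // ltW.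
  rewrite -natr1 mulrDl mul1r exprS -mulrA.
  apply: le_trans (L2 _ n0) _; rewrite ler_pM2l //.
have Hy0 : 0 <= y 0 by exact: Hy.
have [Hw00 Hw0c] := Hw 0 (lexx 0).
pose A := g + g * g * c / (t1 * q).
have A0 : 0 < A by rewrite /A addr_gt0 // divr_gt0 // ?mulr_gt0.
move=> t t0.
have tt : 0 <= t / t1 by rewrite divr_ge0 // ltW.
have /andP[nl nu] := trunc_itv tt.
set n := Num.trunc (t / t1) in nl nu.
rewrite ler_pdivlMr // in nl; rewrite ltr_pdivrMr // in nu.
have Hp : y t `^ p <= A * q ^+ n * y 0 `^ p.
  case: n nl nu => [|n'] nl nu.
    rewrite mul0r in nl; rewrite mul1r in nu.
    have := Hg 0 t (lexx 0) ltac:(apply/andP; split; lra).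
    move=> /(powle (ltW p0) (Hy t t0)).
    rewrite powRM ?(ltW G00) // -/g expr0 mulr1 => H.
    apply: le_trans H _; apply: ler_wpM2r; first exact: powR_ge0.
    rewrite /A lerDl divr_ge0 // ?mulr_ge0 // ltW //.
  have a0 : 0 <= n'%:R * t1 by rewrite mulr_ge0 // ltW.
  have ha : n'.+1%:R * t1 = n'%:R * t1 + t1 by rewrite -natr1 mulrDl mul1r.
  have hb : n'.+2%:R * t1 = n'.+1%:R * t1 + t1 by rewrite -[n'.+2%:R]natr1 mulrDl mul1r.
  have ha0 : 0 <= n'.+1%:R * t1 by rewrite mulr_ge0 // ltW.
  have := Hg (n'.+1%:R * t1) t ha0 ltac:(apply/andP; split; lra).
  move=> /(powle (ltW p0) (Hy t t0)); rewrite powRM ?(ltW G00) ?Hy // -/g => H1.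
  have H2 := L3 _ a0; rewrite -ha in H2.
  apply: le_trans H1 _.
  apply: le_trans (_ : g * (g * (q ^+ n' * (c * y 0 `^ p)) / t1) <= _).
    rewrite ler_pM2l //; apply: le_trans H2 _.
    rewrite ler_pM2r ?invr_gt0 // ler_pM2l //; apply: le_trans (L4 n') _.
    by rewrite ler_wpM2l // exprn_ge0 // ltW.
  have E : g * (g * (q ^+ n' * (c * y 0 `^ p)) / t1) = (g * g * c / (t1 * q)) * q ^+ n'.+1 * y 0 `^ p.
    by rewrite exprSr; field; rewrite gt_eqF // gt_eqF.
  rewrite E; apply: ler_wpM2r; first exact: powR_ge0.
  apply: ler_wpM2r; first by rewrite exprn_ge0 // ltW.
  by rewrite /A lerDr ltW.
have Hq : q ^+ n <= expR (rho * t1) * expR (- rho * t).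
  rewrite qE -expRM_natl -expRD ler_expR.
  rewrite -natr1 mulrDl mul1r in nu.
  nra.
have Hp2 : y t `^ p <= K * expR (- rho * t) * y 0 `^ p.
  apply: le_trans Hp _; apply: ler_wpM2r; first exact: powR_ge0.
  by rewrite /K -mulrA ler_pM2l.
have -> : y t = (y t `^ p) `^ p^-1 by rewrite -powRrM divff ?gt_eqF // powRr1 // Hy.
have pinv : 0 <= p^-1 by rewrite invr_ge0 ltW.
apply: le_trans (powle pinv (powR_ge0 _ _) Hp2) _.
rewrite powRM; [|by rewrite mulr_ge0 ?powR_ge0 ?expR_ge0 // ltW|exact: powR_ge0].
rewrite powRM; [|exact: ltW|exact: expR_ge0].
rewrite -expRM -powRrM divff ?gt_eqF // powRr1 //.
have -> : - rho * t / p = - (rho / p) * t by rewrite mulrAC mulNr mulNr.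
by [].
Qed.

Lemma iii_uges (R : realType) (X : normedModType R) (Q : Type)
  (S : set (R -> Q)) (phi : R -> X -> (R -> Q) -> X) :
  fc_dyn_system S phi ->
  (exists t1 G0 : R, 0 < t1 /\ 0 < G0 /\
     forall t x s, 0 <= t <= t1 -> S s -> `|phi t x s| <= G0 * `|x|) ->
  (exists (V : X -> R) (p c : R),
          (forall x, 0 <= V x) /\ 0 < p /\ 0 < c /\
              (forall x s t, S s -> 0 < t ->
                 (fun r => V (phi r x s)) @ t^'- --> V (phi t x s)) /\
              (forall x s, S s ->
                 (dini_upper phi V x s <= (- `|x| `^ p)%:E)%E) /\
              (forall x, V x <= c * `|x| `^ p)) ->
  UGES S phi.
Proof.
move=> fc [t1 [G0 [t10 [G00 HG]]]] [V [p [c [V0 [p0 [c0 [Vl [Vd Vu]]]]]]]].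
have fc' := fc; move: fc' => [shS [ccS [ph0 [caus [cont coc]]]]].
have [M [lam [M0 [lam0 Hdec]]]] := @decay _ _ _ _ _ c0 p0 t10 G00.
exists M, lam; split => //; split => // t x s t0 Ss.
pose w := fun r => V (phi r x s); pose y := fun r => `|phi r x s|.
have y0 : y 0 = `|x| by rewrite /y ph0.
rewrite -y0; apply: (Hdec w y) => //.
- by move=> r r0; split; [exact: V0 | exact: Vu].
- by move=> r r0; exact: normr_ge0.
- move=> a u a0 /andP[au ua].
  have -> : u = a + (u - a) by ring.
  rewrite /y -coc //; last lra.
  apply: HG; last exact: shS.
  apply/andP; split; lra.
have Hg : forall a u, 0 <= a -> a <= u <= a + t1 -> y u <= G0 * y a.
  move=> a u a0 /andP[au ua].
  have -> : u = a + (u - a) by ring.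
  rewrite /y -coc //; last lra.
  apply: HG; last exact: shS.
  apply/andP; split; lra.
move=> {}t {}t0.
pose m := (y (t + t1) / G0) `^ p.
have := @cmp _ w t (t + t1) m ltac:(lra).
have E : t + t1 - t = t1 by ring.
rewrite E [m * t1]mulrC; apply.
- move=> u /andP[tu ut] e e0.
  have u0 : 0 <= u by lra.
  have Ss' : S (tshift u s) by exact: shS.
  have [d d0 Hd] := @esup_le_to _ _ _ (Vd (phi u x s) (tshift u s) Ss') _ e0.
  exists d => // h /andP[h0 hd].
  rewrite /w -coc //; last exact: ltW.
  apply: le_trans (Hd h _) _; first by rewrite h0 hd.
  rewrite lerD2r lerN2.
  apply: powle; first exact: ltW.
    by rewrite divr_ge0 // ?normr_ge0 // ltW.
  rewrite ler_pdivrMr // mulrC.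
  apply: Hg => //; apply/andP; split; lra.
- move=> u /andP[tu ut] e e0.
  have u0 : 0 < u by lra.
  have := Vl x s u Ss u0 => /cvgrPdist_le /(_ e e0) /nbhs_ballP [d d0 Hd].
  exists d => // r /andP[r1 r2].
  have := Hd r; rewrite /ball /= ger0_norm; last lra.
  move=> /(_ ltac:(lra) r2) H.
  have := ler_norm (w u - w r); rewrite /w; lra.
Qed.

Definition Eset {R : realType} {X : normedModType R} {Q : Type}
  (S : set (R -> Q)) (phi : R -> X -> (R -> Q) -> X) (mu : R) (x : X) : set R :=
  [set r | r = `|x| \/ exists t s, 0 <= t /\ S s /\ r = expR (mu * t) * `|phi t x s|].

Definition Vraw {R : realType} {X : normedModType R} {Q : Type}
  (S : set (R -> Q)) (phi : R -> X -> (R -> Q) -> X) (mu : R) (x : X) : R :=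
  sup (Eset S phi mu x).


Lemma Eset_ub {R : realType} {X : normedModType R} {Q : Type}
  {S : set (R -> Q)} {phi : R -> X -> (R -> Q) -> X} {M lam mu : R} :
  0 < M -> 0 <= mu <= lam ->
  (forall t x s, 0 <= t -> S s -> `|phi t x s| <= M * expR (- lam * t) * `|x|) ->
  forall x, ubound (Eset S phi mu x) ((M + 1) * `|x|).
Proof.
move=> M0 /andP[mu0 mul] Hu x r [->|[t [s [t0 [Ss ->]]]]].
  by rewrite ler_peMl // lerDr ltW.
apply: le_trans (_ : expR (mu * t) * (M * expR (- lam * t) * `|x|) <= _).
  by rewrite ler_wpM2l ?expR_ge0 // Hu.
have -> : expR (mu * t) * (M * expR (- lam * t) * `|x|) = (M * expR (mu * t + - lam * t)) * `|x| by rewrite expRD; ring.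
apply: ler_wpM2r => //; apply: le_trans (_ : M * 1 <= _).
  apply: ler_wpM2l; first exact: ltW.
  rewrite -expR0 ler_expR; nra.
by rewrite mulr1 lerDl.
Qed.

Lemma Vraw_props {R : realType} {X : normedModType R} {Q : Type}
  {S : set (R -> Q)} {phi : R -> X -> (R -> Q) -> X} {M lam mu : R} :
  0 < M -> 0 <= mu <= lam ->
  (forall t x s, 0 <= t -> S s -> `|phi t x s| <= M * expR (- lam * t) * `|x|) ->
  (forall x r, Eset S phi mu x r -> r <= Vraw S phi mu x) /\
  (forall x, `|x| <= Vraw S phi mu x) /\
  (forall x, Vraw S phi mu x <= (M + 1) * `|x|).
Proof.
move=> M0 mul Hu.
have ub := Eset_ub M0 mul Hu.
have A : forall x r, Eset S phi mu x r -> r <= Vraw S phi mu x.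
  move=> x r Er; apply: ub_le_sup => //; exists ((M + 1) * `|x|); exact: ub.
split => //; split; first by move=> x; apply: A; left.
move=> x; apply: ge_sup; last exact: ub.
by exists `|x|; left.
Qed.

Lemma Vraw_dec {R : realType} {X : normedModType R} {Q : Type}
  {S : set (R -> Q)} {phi : R -> X -> (R -> Q) -> X} {M lam mu : R} :
  fc_dyn_system S phi -> S_unif_cont S phi ->
  0 < M -> 0 <= mu <= lam ->
  (forall t x s, 0 <= t -> S s -> `|phi t x s| <= M * expR (- lam * t) * `|x|) ->
  forall x s h, S s -> 0 < h ->
  Vraw S phi mu (phi h x s) <= expR (- (mu * h)) * Vraw S phi mu x.
Proof.
move=> fc uc M0 mul Hu x s h Ss h0.
have fc' := fc; move: fc' => [shS [ccS [ph0 [caus [cont coc]]]]].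
have [A [B C]] := Vraw_props M0 mul Hu.
apply: ge_sup; first by exists `|phi h x s|; left.
move=> r [->|[t [s' [t0 [Ss' ->]]]]].
  have -> : `|phi h x s| = expR (- (mu * h)) * (expR (mu * h) * `|phi h x s|).
    by rewrite mulrA -expRD addNr expR0 mul1r.
  apply: ler_wpM2l; first exact: expR_ge0.
  apply: A; right; exists h, s; split; first exact: ltW.
  by [].
rewrite (@phi_concat _ _ _ _ _ fc uc) //.
have -> : expR (mu * t) = expR (- (mu * h)) * expR (mu * (h + t)).
  by rewrite -expRD; congr expR; ring.
rewrite -mulrA; apply: ler_wpM2l; first exact: expR_ge0.
apply: A; right; exists (h + t), (concat h s s'); split; first lra.
split => //; by case: fc => _ [cc _]; apply: cc.
Qed.

Lemma Vraw_cont {R : realType} {X : normedModType R} {Q : Type}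
  {S : set (R -> Q)} {phi : R -> X -> (R -> Q) -> X} {M lam mu : R} :
  S_unif_cont S phi ->
  0 < M -> 0 < mu -> 2 * mu <= lam ->
  (forall t x s, 0 <= t -> S s -> `|phi t x s| <= M * expR (- lam * t) * `|x|) ->
  forall x eps, 0 < eps -> exists2 d, 0 < d &
    forall y, `|x - y| < d -> `|Vraw S phi mu x - Vraw S phi mu y| <= eps.
Proof.
move=> uc M0 mu0 mul Hu x eps e0.
have mul' : 0 <= mu <= lam by apply/andP; split; lra.
have [A [B C]] := Vraw_props M0 mul' Hu.
pose T := M * (`|x| + 1) / (eps * mu).
have nx0 := normr_ge0 x.
have T0 : 0 < T by rewrite divr_gt0 ?mulr_gt0 //; lra.
have HT : M * (`|x| + 1) * expR (- (mu * T)) <= eps.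
  have h1 := expR_ge1Dx (mu * T).
  have E : mu * T = M * (`|x| + 1) / eps by rewrite /T; field; rewrite !gt_eqF.
  rewrite E in h1.
  rewrite expRN -/(_ / _) ler_pdivrMr ?expR_gt0 //.
  rewrite E.
  have : M * (`|x| + 1) / eps * eps = M * (`|x| + 1) by field; rewrite gt_eqF.
  nra.
pose eps' := eps * expR (- (mu * T)).
have e'0 : 0 < eps' by rewrite mulr_gt0 ?expR_gt0.
have [eta [eta0 Heta]] := uc T x eps' T0 e'0.
pose d := Num.min (Num.min eta 1) eps.
have d0 : 0 < d by rewrite !lt_min eta0 e0 ltr01.
have claim : forall u v, `|u| <= `|x| + 1 -> `|u| <= `|v| + eps ->
    (forall t s, 0 <= t <= T -> S s -> `|phi t u s - phi t v s| <= eps') ->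
    Vraw S phi mu u <= Vraw S phi mu v + eps.
  move=> u v hu1 hu2 hd.
  apply: ge_sup; first by exists `|u|; left.
  have Bv := B v; have nv0 := normr_ge0 v.
  move=> r [->|[t [s [t0 [Ss ->]]]]]; first lra.
  have [tT|Tt] := leP t T.
    have h1 : `|phi t u s| <= `|phi t v s| + eps'.
      rewrite -[X in `|X|](subrK (phi t v s)) addrC; apply: le_trans (ler_normD _ _) _.
      by rewrite lerD2l; apply: hd => //; rewrite t0.
    have h2 : expR (mu * t) * `|phi t v s| <= Vraw S phi mu v.
      by apply: A; right; exists t, s.
    have h3 : expR (mu * t) * eps' <= eps.
      rewrite /eps' mulrCA -expRD -[X in _ <= X]mulr1 ler_pM2l // -expR0 ler_expR.
      nra.
    apply: le_trans (_ : expR (mu * t) * (`|phi t v s| + eps') <= _).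
      by rewrite ler_wpM2l ?expR_ge0.
    rewrite mulrDr; lra.
  apply: le_trans (_ : expR (mu * t) * (M * expR (- lam * t) * `|u|) <= _).
    by rewrite ler_wpM2l ?expR_ge0 // Hu //.
  have -> : expR (mu * t) * (M * expR (- lam * t) * `|u|) = M * expR (mu * t + - lam * t) * `|u| by rewrite expRD; ring.
  apply: le_trans (_ : M * (`|x| + 1) * expR (- (mu * T)) <= _); last lra.
  have -> : M * expR (mu * t + - lam * t) * `|u| = (M * `|u|) * expR (mu * t + - lam * t) by ring.
  apply: ler_pM; [by rewrite mulr_ge0 // ltW|exact: expR_ge0| |].
    by rewrite ler_pM2l.
  rewrite ler_expR; nra.
exists d => // y hxy.
have hd1 : d <= eta by rewrite /d !ge_min lexx.
have hd2 : d <= 1 by rewrite /d !ge_min lexx orbT.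
have hd3 : d <= eps by rewrite /d ge_min lexx orbT.
have nxy : `|y| <= `|x| + `|x - y|.
  rewrite -[X in `|X|](subrK x) addrC; apply: le_trans (ler_normD _ _) _.
  by rewrite distrC.
have nyx : `|x| <= `|y| + `|x - y|.
  rewrite -[X in `|X|](subrK y) addrC; apply: le_trans (ler_normD _ _) _.
  by [].
have c1 : Vraw S phi mu y <= Vraw S phi mu x + eps.
  apply: claim; [lra|lra|].
  move=> t s ht Ss; rewrite distrC; apply: Heta => //.
  rewrite distrC; lra.
have c2 : Vraw S phi mu x <= Vraw S phi mu y + eps.
  apply: claim; [lra|lra|].
  move=> t s ht Ss; apply: Heta => //.
  rewrite distrC; lra.
rewrite ler_norml; apply/andP; split; lra.
Qed.

Lemma dec_arith {R : realType} {W v z a mu h e d : R} :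
  0 < mu -> 0 < h -> 0 < e -> d = e / (mu * z + 1) -> h < d -> 0 <= z ->
  W <= a * v -> z <= v -> 0 < a -> a * (1 + mu * h) <= 1 -> 1 - mu * h <= a ->
  (W / mu - v / mu) / h <= - z + e.
Proof.
move=> mu0 h0 e0 dE hd z0 HW zv a0 ha ha'.
have f1 : mu * h * a <= 1 - a.
  have E : a * (1 + mu * h) = a + mu * h * a by ring.
  rewrite E in ha; lra.
have v0 : 0 <= v by lra.
have f3 : mu * h * a * v <= (1 - a) * v by apply: ler_wpM2r.
have f2 : mu * h * a * z <= mu * h * a * v.
  by apply: ler_wpM2l => //; rewrite !mulr_ge0 // ltW.
have mha : 0 <= mu * h * a by rewrite !mulr_ge0 // ltW.
have a1 : a <= 1 by lra.
have hz : h * (mu * z + 1) < e.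
  move: hd; rewrite dE ltr_pdivlMr //; last by rewrite ltr_wpDl // mulr_ge0 // ltW.
have f4 : (1 - a) * z <= e.
  apply: le_trans (_ : (mu * h) * z <= _); first by apply: ler_wpM2r => //; lra.
  have : h * (mu * z) <= h * (mu * z + 1) by rewrite ler_pM2l // lerDl.
  have -> : mu * h * z = h * (mu * z) by ring.
  lra.
have key : W - v <= mu * h * (- z + e).
  have E1 : mu * h * (- z + e) = - (mu * h * z) + mu * h * e by ring.
  have f5 : mu * h * ((1 - a) * z) <= mu * h * e by rewrite ler_pM2l ?mulr_gt0.
  have E2 : mu * h * ((1 - a) * z) = mu * h * z - mu * h * a * z by ring.
  have E3 : (1 - a) * v = v - a * v by ring.
  lra.
rewrite ler_pdivrMr // -mulrBl ler_pdivrMr //; nra.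
Qed.

Lemma uges_ii {R : realType} {X : normedModType R} {Q : Type}
  {S : set (R -> Q)} {phi : R -> X -> (R -> Q) -> X} :
  fc_dyn_system S phi -> S_unif_cont S phi -> UGES S phi ->
  (exists (V : X -> R) (p cl cu : R),
          continuous V /\ (forall x, 0 <= V x) /\ 0 < p /\ 0 < cl /\ 0 < cu /\
              (forall x, cl * `|x| `^ p <= V x /\ V x <= cu * `|x| `^ p) /\
              (forall x s, S s ->
                 (dini_upper phi V x s <= (- `|x| `^ p)%:E)%E)).
Proof.
move=> fc uc [M [lam [M0 [lam0 Hu]]]].
pose mu := lam / 2.
have mu0 : 0 < mu by rewrite divr_gt0.
have mul : 0 <= mu <= lam by apply/andP; split; rewrite /mu; lra.
have mul2 : 2 * mu <= lam by rewrite /mu; lra.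
have [A [B C]] := Vraw_props M0 mul Hu.
exists (fun x => Vraw S phi mu x / mu), 1, mu^-1, ((M + 1) / mu).
split.
  move=> x; apply/cvgrPdist_le => eps e0.
  have [d d0 Hd] := Vraw_cont uc M0 mu0 mul2 Hu x (eps * mu) ltac:(by rewrite mulr_gt0).
  apply/nbhs_normP; exists d => // y /= hy.
  rewrite -mulrBl normrM normfV (gtr0_norm mu0) ler_pdivrMr //.
  exact: Hd.
split; first by move=> x; apply: divr_ge0; [exact: le_trans (normr_ge0 x) (B x) | exact: ltW].
split; first exact: ltr01.
split; first by rewrite invr_gt0.
split; first by rewrite divr_gt0 //; lra.
split.
  move=> x; rewrite powRr1 //; split.
    by rewrite mulrC ler_pM2r ?invr_gt0.
  by rewrite mulrAC ler_pM2r ?invr_gt0.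
move=> x s Ss; rewrite powRr1 //.
apply: esup_le_of => e e0.
exists (e / (mu * `|x| + 1)).
  by rewrite divr_gt0 // ltr_wpDl // mulr_ge0 // ltW.
move=> h /andP[h0 hd] /=.
apply: (dec_arith mu0 h0 e0 erefl hd (normr_ge0 x) _ (B x) (expR_gt0 _)).
- exact: (Vraw_dec fc uc M0 mul Hu x s h Ss h0).
- rewrite expRN mulrC ler_pdivrMr ?expR_gt0 // mul1r; exact: expR_ge1Dx.
- by have := expR_ge1Dx (- (mu * h)); lra.
Qed.

Theorem corollary1 (R : realType) (X : completeNormedModType R) (Q : Type)
  (q0 : Q) (S : set (R -> Q)) (phi : R -> X -> (R -> Q) -> X) :
  fc_dyn_system S phi ->
  S_unif_cont S phi ->
  (exists t1 G0 : R, 0 < t1 /\ 0 < G0 /\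
     forall t x s, 0 <= t <= t1 -> S s -> `|phi t x s| <= G0 * `|x|) ->
  [<-> UGES S phi;
       (exists (V : X -> R) (p cl cu : R),
          continuous V /\ (forall x, 0 <= V x) /\ 0 < p /\ 0 < cl /\ 0 < cu /\
              (forall x, cl * `|x| `^ p <= V x /\ V x <= cu * `|x| `^ p) /\
              (forall x s, S s ->
                 (dini_upper phi V x s <= (- `|x| `^ p)%:E)%E));
       (exists (V : X -> R) (p c : R),
          (forall x, 0 <= V x) /\ 0 < p /\ 0 < c /\
              (forall x s t, S s -> 0 < t ->
                 (fun r => V (phi r x s)) @ t^'- --> V (phi t x s)) /\
              (forall x s, S s ->
                 (dini_upper phi V x s <= (- `|x| `^ p)%:E)%E) /\
              (forall x, V x <= c * `|x| `^ p))].
Proof.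
move=> fc uc HG.
tfae.
- exact: uges_ii.
- move=> [V [p [cl [cu [Vc [V0 [p0 [cl0 [cu0 [Vb Vd]]]]]]]]]].
  exists V, p, cu; split => //; split => //; split => //; split.
    move=> x s t Ss t0; apply: leftc => //.
    by case: fc => _ [_ [_ [_ [cont _]]]]; apply: cont.
  by split => // x; case: (Vb x).
- exact: iii_uges.
Qed.
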